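(* Let $\bm{Z}=(Z_1,\ldots,Z_n)^T\in\{0,1\}^n$ with both treatment groups nonempty, and let $\bm{X}\in\mathbb{R}^{n\times p}$ be a covariate matrix whose first column is the all-ones vector, with rows $\bm{X}_1,\ldots,\bm{X}_n$. Let $\sigma^2>0$, $\rho^2\ge 0$, let $\bm{S}$ be an $n\times n$ symmetric positive semidefinite matrix with orthonormal eigenvectors $\bm{v}_1,\ldots,\bm{v}_n$ (where $v_{ki}$ denotes the $i$-th entry of $\bm{v}_k$) and corresponding eigenvalues $\lambda_1\ge\cdots\ge\lambda_n\ge 0$, and set $\bm{\Sigma}=\sigma^2\bm{I}_n+\rho^2\bm{S}$. Assume $\bm{X}^T\bm{\Sigma}^{-1}\bm{X}$ is invertible and $\bm{Z}^T\bm{\Sigma}^{-1}(\bm{I}_n-\bm{X}(\bm{X}^T\bm{\Sigma}^{-1}\bm{X})^{-1}\bm{X}^T\bm{\Sigma}^{-1})\bm{Z}\neq 0$. Consider the quadratic program $$\min_{\bm{w}\in\mathbb{R}^n}\Big\{\sigma^2\sum_{i=1}^n w_i^2+\rho^2\sum_{k=1}^n\lambda_k\Big(\sum_{i:Z_i=1}w_iv_{ki}-\sum_{i:Z_i=0}w_iv_{ki}\Big)^2\Big\}$$ subject to $\sum_{i:Z_i=1}w_i=\sum_{i:Z_i=0}w_i=1$ and $\sum_{i:Z_i=1}w_i\bm{X}_i=\sum_{i:Z_i=0}w_i\bm{X}_i$. Then the solution of this problem is $$\bm{w}=\bm{M}\,\frac{(\bm{I}_n-\bm{\Sigma}^{-1}\bm{X}(\bm{X}^T\bm{\Sigma}^{-1}\bm{X})^{-1}\bm{X}^T)\bm{\Sigma}^{-1}\bm{Z}}{\bm{Z}^T\bm{\Sigma}^{-1}(\bm{I}_n-\bm{X}(\bm{X}^T\bm{\Sigma}^{-1}\bm{X})^{-1}\bm{X}^T\bm{\Sigma}^{-1})\bm{Z}},$$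 where $\bm{M}$ is diagonal with $M_{ii}=2Z_i-1$; i.e. it is the vector of implied weights of the GLS estimator $\hat\tau_{GLS}$ of the treatment coefficient.
   Context: The GLS estimator of $\tau$ in the model $\bm{Y}=\bm{X}\bm{\beta}+\tau\bm{Z}+\bm{\epsilon}$ with error covariance $\bm{\Sigma}$ is the last coordinate of $\big(\begin{pmatrix}\bm{X} & \bm{Z}\end{pmatrix}^T\bm{\Sigma}^{-1}\begin{pmatrix}\bm{X} & \bm{Z}\end{pmatrix}\big)^{-1}\begin{pmatrix}\bm{X} & \bm{Z}\end{pmatrix}^T\bm{\Sigma}^{-1}\bm{Y}$; its implied weights are the vector $\bm{w}$ above, in the sense that $\hat\tau_{GLS}=\sum_{Z_i=1}w_iY_i-\sum_{Z_i=0}w_iY_i$. *)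

(* Defs.v *)
From mathcomp Require Import all_boot all_order all_algebra.
Set Implicit Arguments. Unset Strict Implicit. Unset Printing Implicit Defensive.
Import Order.TTheory GRing.Theory Num.Theory.
Local Open Scope ring_scope.

(* Treatment indicator z : 'I_n -> bool (Z_i = 1 iff z i). *)

Definition Zvec (R : ringType) (n : nat) (z : 'I_n -> bool) : 'cV[R]_n :=
  \col_i (z i)%:R.

Definition Mdiag (R : ringType) (n : nat) (z : 'I_n -> bool) : 'M[R]_n :=
  \matrix_(i, j) (if i == j then 2 * (z i)%:R - 1 else 0).

Definition Sigma (R : ringType) (n : nat) (sigma2 rho2 : R) (S : 'M[R]_n) : 'M[R]_n :=
  sigma2%:M + rho2 *: S.

(* Objective: sigma^2 sum_i w_i^2
   + rho^2 sum_k lambda_k (sum_{Z_i=1} w_i v_ki - sum_{Z_i=0} w_i v_ki)^2,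
   where v_k is the k-th column of V, so v_ki = V i k. *)
Definition objective (R : ringType) (n : nat) (z : 'I_n -> bool)
    (sigma2 rho2 : R) (lam : 'I_n -> R) (V : 'M[R]_n) (w : 'cV[R]_n) : R :=
  sigma2 * \sum_i (w i 0) ^+ 2 +
  rho2 * \sum_k lam k *
     (\sum_(i | z i) w i 0 * V i k - \sum_(i | ~~ z i) w i 0 * V i k) ^+ 2.

Definition feasible (R : ringType) (n p : nat) (z : 'I_n -> bool)
    (X : 'M[R]_(n, p)) (w : 'cV[R]_n) : Prop :=
  [/\ \sum_(i | z i) w i 0 = 1, \sum_(i | ~~ z i) w i 0 = 1 &
      forall j : 'I_p, \sum_(i | z i) w i 0 * X i j = \sum_(i | ~~ z i) w i 0 * X i j].

Definition gls_denom (R : comUnitRingType) (n p : nat) (z : 'I_n -> bool)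
    (X : 'M[R]_(n, p)) (Sig : 'M[R]_n) : R :=
  let Si := invmx Sig in
  let Zc := Zvec R z in
  (Zc^T *m Si *m (1%:M - X *m invmx (X^T *m Si *m X) *m X^T *m Si) *m Zc) 0 0.

Definition gls_weights (R : fieldType) (n p : nat) (z : 'I_n -> bool)
    (X : 'M[R]_(n, p)) (Sig : 'M[R]_n) : 'cV[R]_n :=
  let Si := invmx Sig in
  (gls_denom z X Sig)^-1 *:
    (Mdiag R z *m ((1%:M - Si *m X *m invmx (X^T *m Si *m X) *m X^T) *m Si *m Zvec R z)).

(* Main.v *)
Require Import Defs.
From mathcomp Require Import all_boot all_order all_algebra ring.
Set Implicit Arguments. Unset Strict Implicit. Unset Printing Implicit Defensive.
Import Order.TTheory GRing.Theory Num.Theory.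
Local Open Scope ring_scope.

Section Helpers.
Variables (R : realFieldType) (n : nat) (z : 'I_n -> bool).

Lemma Mdiag_diag : Mdiag R z = diag_mx (\row_i (2 * (z i)%:R - 1)).
Proof. by apply/matrixP => i j; rewrite /Mdiag !mxE; case: eqP => [->|]; rewrite ?mulr1n ?mulr0n. Qed.

Lemma Mw_entry (w : 'cV[R]_n) i :
  (Mdiag R z *m w) i 0 = if z i then w i 0 else - w i 0.
Proof.
rewrite Mdiag_diag mul_diag_mx !mxE; case: (z i) => /=.
  by rewrite mulr1 [_ - 1]addrK mul1r.
by rewrite mulr0 sub0r mulN1r.
Qed.

Lemma MM (w : 'cV[R]_n) : Mdiag R z *m (Mdiag R z *m w) = w.
Proof.
apply/matrixP => i j; rewrite (ord1 j) !Mw_entry; case: (z i) => //.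
by rewrite opprK.
Qed.

Lemma sum_Mw (w : 'cV[R]_n) (c : 'I_n -> R) :
  \sum_i c i * (Mdiag R z *m w) i 0 =
  \sum_(i | z i) w i 0 * c i - \sum_(i | ~~ z i) w i 0 * c i.
Proof.
rewrite (bigID z) /=; congr (_ + _).
  by apply: eq_bigr => i zi; rewrite Mw_entry zi mulrC.
rewrite -sumrN; apply: eq_bigr => i /negbTE zi; rewrite Mw_entry zi.
by rewrite mulrN mulrC.
Qed.

Lemma sumZ_Mw (w : 'cV[R]_n) :
  \sum_i (Zvec R z) i 0 * (Mdiag R z *m w) i 0 = \sum_(i | z i) w i 0.
Proof.
rewrite (bigID z) /= [X in _ + X]big1 ?addr0.
  by apply: eq_bigr => i zi; rewrite Mw_entry zi mxE zi mul1r.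
by move=> i /negbTE zi; rewrite mxE zi mul0r.
Qed.

Lemma feasibleE p (X : 'M[R]_(n, p.+1)) (w : 'cV[R]_n) :
  (forall i, X i ord0 = 1) ->
  feasible z X w <->
  ((Zvec R z)^T *m (Mdiag R z *m w)) 0 0 = 1 /\ X^T *m (Mdiag R z *m w) = 0.
Proof.
move=> X1; split.
  case=> h1 h2 h3; split.
    by rewrite -[RHS]h1 -sumZ_Mw [LHS]mxE; apply: eq_bigr => i _; rewrite !mxE.
  apply/matrixP => j k; rewrite (ord1 k) !mxE.
  rewrite (eq_bigr (fun i => X i j * (Mdiag R z *m w) i 0)); last by move=> i _; rewrite mxE.
  by rewrite sum_Mw h3 subrr.
case=> h1 h2.
have hs : forall j, \sum_(i | z i) w i 0 * X i j - \sum_(i | ~~ z i) w i 0 * X i j = 0.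
  move=> j; rewrite -sum_Mw.
  have H := congr1 (fun M : 'M[R]_(p.+1,1) => M j 0) h2; rewrite /= [in RHS]mxE in H.
  by apply: (etrans _ H); rewrite mxE; apply: eq_bigr => i _; rewrite !mxE.
have hz : \sum_(i | z i) w i 0 = 1.
  by apply: (etrans _ h1); rewrite -sumZ_Mw [RHS]mxE; apply: eq_bigr => i _; rewrite !mxE.
split => //.
  move: (hs ord0); rewrite (eq_bigr (fun i => w i 0)); last by move=> i _; rewrite X1 mulr1.
  rewrite [X in _ - X](eq_bigr (fun i => w i 0)); last by move=> i _; rewrite X1 mulr1.
  by rewrite hz => /eqP; rewrite subr_eq0 => /eqP <-.
by move=> j; apply/eqP; rewrite -subr_eq0 hs.
Qed.


Lemma SV_diag (S V : 'M[R]_n) (lam : 'I_n -> R) :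
  (forall k, S *m col k V = lam k *: col k V) ->
  S *m V = V *m diag_mx (\row_k lam k).
Proof.
move=> H; apply/matrixP => i k.
have := congr1 (fun M : 'M[R]_(n,1) => M i 0) (H k) => /=.
rewrite mul_mx_diag !mxE => E; rewrite mulrC -E.
by apply: eq_bigr => j _; rewrite !mxE.
Qed.

Lemma Qform (sigma2 rho2 : R) (S V : 'M[R]_n) (lam : 'I_n -> R) (u : 'cV[R]_n) :
  V *m V^T = 1%:M ->
  S *m V = V *m diag_mx (\row_k lam k) ->
  (u^T *m Sigma sigma2 rho2 S *m u) 0 0 =
  sigma2 * \sum_i (u i 0) ^+ 2 + rho2 * \sum_k lam k * ((V^T *m u) k 0) ^+ 2.
Proof.
move=> VVt SV.
rewrite /Sigma mulmxDr mulmxDl mul_mx_scalar -scalemxAr -scalemxAl -scalemxAl.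
have -> : u^T *m S *m u = (V^T *m u)^T *m diag_mx (\row_k lam k) *m (V^T *m u).
  by rewrite -[in LHS](mulmx1 S) -VVt (mulmxA S V) SV trmx_mul trmxK !mulmxA.
rewrite mxE [X in X + _]mxE [X in _ + X]mxE.
congr (_ * _ + _ * _).
  by rewrite mxE; apply: eq_bigr => i _; rewrite mxE expr2.
rewrite mul_mx_diag mxE; apply: eq_bigr => k _; rewrite !mxE; ring.
Qed.

End Helpers.

Lemma mxBE (R : pzRingType) m k (M N : 'M[R]_(m,k)) i j : (M - N) i j = M i j - N i j.
Proof. by rewrite !mxE. Qed.
Lemma tr00 (R : Type) (M : 'M[R]_1) : M^T 0 0 = M 0 0.
Proof. by rewrite mxE. Qed.
Lemma quad_expand (R : comPzRingType) n (M : 'M[R]_n) (a b : 'cV[R]_n) :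
  ((a + b)^T *m M *m (a + b)) 0 0 =
  (a^T *m M *m a) 0 0 + (a^T *m M *m b) 0 0 + (b^T *m M *m a) 0 0 + (b^T *m M *m b) 0 0.
Proof.
have trD : (a + b)^T = a^T + b^T by apply/matrixP => i j; rewrite !mxE.
by rewrite trD !mulmxDl !mulmxDr !mxE !addrA.
Qed.
Lemma mxDE (R : pzRingType) m k (M N : 'M[R]_(m,k)) i j : (M + N) i j = M i j + N i j.
Proof. by rewrite !mxE. Qed.

Unset Implicit Arguments.
Set Strict Implicit.

Theorem proposition2 (R : realFieldType) (n p : nat)
    (z : 'I_n -> bool) (X : 'M[R]_(n, p.+1))
    (sigma2 rho2 : R) (S V : 'M[R]_n) (lam : 'I_n -> R) :
  (exists i, z i) -> (exists i, ~~ z i) ->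
  (forall i, X i ord0 = 1) ->
  0 < sigma2 -> 0 <= rho2 ->
  S^T = S ->
  V^T *m V = 1%:M ->
  (forall k, S *m col k V = lam k *: col k V) ->
  (forall k l : 'I_n, (k <= l)%N -> lam l <= lam k) ->
  (forall k, 0 <= lam k) ->
  (X^T *m invmx (Sigma sigma2 rho2 S) *m X) \in unitmx ->
  gls_denom z X (Sigma sigma2 rho2 S) != 0 ->
  let w0 := gls_weights z X (Sigma sigma2 rho2 S) in
  [/\ feasible z X w0,
      forall w, feasible z X w ->
        objective z sigma2 rho2 lam V w0 <= objective z sigma2 rho2 lam V w
    & forall w, feasible z X w ->
        objective z sigma2 rho2 lam V w = objective z sigma2 rho2 lam V w0 -> w = w0].
Proof.
move=> _ _ X1 s2 r2 St VV SVk _ lam0 XSX d0 w0.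
have VVt : V *m V^T = 1%:M by apply: mulmx1C.
have SV := SV_diag SVk.
set Sig := Sigma sigma2 rho2 S.
have Qf : forall u : 'cV[R]_n, (u^T *m Sig *m u) 0 0 =
   sigma2 * \sum_i (u i 0) ^+ 2 + rho2 * \sum_k lam k * ((V^T *m u) k 0) ^+ 2.
  by move=> u; rewrite /Sig (Qform _ _ _ VVt SV).
have Qge : forall u : 'cV[R]_n, sigma2 * \sum_i (u i 0) ^+ 2 <= (u^T *m Sig *m u) 0 0.
  move=> u; rewrite Qf lerDl; apply: mulr_ge0 => //; apply: sumr_ge0 => k _.
  by apply: mulr_ge0 => //; apply: sqr_ge0.
have Q0 : forall u : 'cV[R]_n, (u^T *m Sig *m u) 0 0 <= 0 -> u = 0.
  move=> u H.
  have hs0 : 0 <= \sum_i (u i 0) ^+ 2 by apply: sumr_ge0 => i _; apply: sqr_ge0.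
  have hs : \sum_i (u i 0) ^+ 2 = 0.
    apply/eqP; rewrite eq_le hs0 andbT.
    by rewrite -(pmulr_rle0 _ s2); apply: le_trans (Qge u) H.
  apply/matrixP => i j; rewrite (ord1 j) mxE.
  have := psumr_eq0P (fun i _ => sqr_ge0 (u i 0)) hs (i := i) isT.
  by move/eqP; rewrite sqrf_eq0 => /eqP.
have SigU : Sig \in unitmx.
  rewrite unitmxE unitfE; apply/det0P => -[v vn0 vS].
  have : v^T = 0.
    apply: Q0; rewrite trmxK vS mul0mx mxE //.
  by move/(congr1 trmx); rewrite trmxK linear0 => vz; rewrite vz eqxx in vn0.
have SigT : Sig^T = Sig.
  apply/matrixP => i j; rewrite /Sig /Sigma !mxE -[S in RHS]St mxE.
  by rewrite eq_sym.
set Si := invmx Sig.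
set G := invmx (X^T *m Si *m X).
set Zc := Zvec R z.
set A := (1%:M - Si *m X *m G *m X^T) *m Si *m Zc.
set d := gls_denom z X Sig.
set us := d^-1 *: A.
have w0E : w0 = Mdiag R z *m us by rewrite /w0 /gls_weights scalemxAr.
have Mw0 : Mdiag R z *m w0 = us by rewrite w0E MM.
have XSXG : X^T *m Si *m X *m G = 1%:M by apply: mulmxV.
have SS : Sig *m Si = 1%:M by apply: mulmxV.
have XA : X^T *m A = 0.
  rewrite /A !mulmxA mulmxBr mulmx1 !mulmxBl !mulmxA XSXG mul1mx.
  by rewrite subrr.
have ZA : (Zc^T *m A) 0 0 = d.
  rewrite /d /gls_denom -/Si -/G -/Zc /A.
  by rewrite !mulmxBl !mulmxBr !mul1mx !mulmx1 !mulmxBl !mulmxA.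
have SigA : Sig *m A = Zc - X *m G *m X^T *m Si *m Zc.
  rewrite /A !mulmxA !mulmxBr !mulmx1 !mulmxBl !mulmxA SS !mul1mx.
  by [].
have XUs : X^T *m us = 0 by rewrite /us -scalemxAr XA scaler0.
have ZUs : (Zc^T *m us) 0 0 = 1 by rewrite /us -scalemxAr mxE ZA mulVf.
have cross : forall h : 'cV[R]_n, X^T *m h = 0 -> (Zc^T *m h) 0 0 = 0 ->
    (h^T *m Sig *m us) 0 0 = 0.
  move=> h hX hZ.
  have hX' : h^T *m X = 0 by rewrite -[X in h^T *m X]trmxK -trmx_mul hX linear0.
  have hZ' : (h^T *m Zc) 0 0 = 0.
    by rewrite -[h^T *m Zc]trmxK trmx_mul trmxK mxE.
  rewrite /us -scalemxAr -mulmxA SigA mulmxBr !mulmxA hX' !mul0mx subr0 mxE hZ'.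
  by rewrite mulr0.
have decomp : forall u : 'cV[R]_n, X^T *m u = 0 -> (Zc^T *m u) 0 0 = 1 ->
    (u^T *m Sig *m u) 0 0 = (us^T *m Sig *m us) 0 0 + ((u - us)^T *m Sig *m (u - us)) 0 0.
  move=> u uX uZ.
  set h := u - us.
  have hX : X^T *m h = 0 by rewrite /h mulmxBr uX XUs subrr.
  have hZ : (Zc^T *m h) 0 0 = 0 by rewrite /h mulmxBr mxBE uZ ZUs subrr.
  have -> : u = us + h by rewrite /h addrC subrK.
  have c2 : (us^T *m Sig *m h) 0 0 = 0.
    by rewrite -tr00 !trmx_mul trmxK SigT mulmxA cross.
  rewrite quad_expand c2.
  have c1 : (h^T *m Sig *m us) 0 0 = 0 by apply: cross.
  by rewrite c1 !addr0.
have objE : forall w, objective z sigma2 rho2 lam V w =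
   ((Mdiag R z *m w)^T *m Sig *m (Mdiag R z *m w)) 0 0.
  move=> w; rewrite Qf /objective; congr (sigma2 * _ + rho2 * _).
    by apply: eq_bigr => i _; rewrite Mw_entry; case: (z i); rewrite ?sqrrN.
  apply: eq_bigr => k _; congr (lam k * _ ^+ 2).
  rewrite -(sum_Mw z w (fun i => V i k)) mxE.
  by apply: eq_bigr => i _; rewrite [V^T k i]mxE.
have feasU : forall w, feasible z X w ->
    X^T *m (Mdiag R z *m w) = 0 /\ (Zc^T *m (Mdiag R z *m w)) 0 0 = 1.
  by move=> w /(feasibleE z w X1) [].
split.
- by apply/(feasibleE z w0 X1); rewrite Mw0.
- move=> w /feasU [h1 h2].
  rewrite !objE Mw0 (decomp _ h1 h2) lerDl.
  by apply: le_trans (Qge _); apply: mulr_ge0; [exact: ltW | apply: sumr_ge0 => i _; apply: sqr_ge0].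
- move=> w /feasU [h1 h2].
  rewrite !objE Mw0 (decomp _ h1 h2) => /eqP; rewrite -subr_eq0 addrC addKr => /eqP H.
  have := Q0 (Mdiag R z *m w - us); rewrite H lexx => /(_ isT) /eqP.
  rewrite subr_eq0 => /eqP E.
  by rewrite -(MM z w) E w0E.
Qed.
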